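(* Let $K_1,K_2$ be finite simplicial complexes on disjoint vertex sets, let $k\ge 0$, and let $K=K_1\vee_k K_2$ be a $k$-wedge sum obtained by identifying a $k$-face $F_1$ of $K_1$ with a $k$-face $F_2$ of $K_2$. If $i\ge k-1$ (and $i\ge 0$), then $B_i(K)$ is balanced if and only if both $B_i(K_1)$ and $B_i(K_2)$ are balanced.
   Context: $S_j(K)$ denotes the set of faces of cardinality $j+1$. The $k$-wedge sum: given $F_1=\{v_0,\dots,v_k\}\in S_k(K_1)$, $F_2=\{u_0,\dots,u_k\}\in S_k(K_2)$ and a bijection $v_j\mapsto u_j$, $K_1\vee_kK_2$ is the complex obtained from $K_1\cup K_2$ by identifying $v_j$ with $u_j$ for all $j$ (so $F_1$ and all its subfaces are identified with $F_2$ and its subfaces). For a complex $K$ with an orientation (ordering of each face up to even permutations), $B_i(K)$ is the signed bipartite graph with vertex set $S_i(K)\cup S_{i+1}(K)$, an edge $\{F,\bar F\}$ whenever $F\subset\bar F$, with sign $\mathrm{sgn}([F],\partial[\bar F])$ (equal to $(-1)^j$ if $F$ is $\bar F$ with its $j$-th vertex removed and the orientation of $F$ agrees with the induced one, and $-(-1)^j$ otherwise). A signed graph is balanced if every cycle has positive sign (product of edge signs); balancedness of $B_i(K)$ does not depend on the chosen orientation. *)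

(* Defs.v *)
From mathcomp Require Import all_boot.
Set Implicit Arguments. Unset Strict Implicit. Unset Printing Implicit Defensive.

Section SC.
Variable V : finType.

Definition is_complex (K : {set {set V}}) : Prop :=
  forall s t : {set V}, s \in K -> t \subset s -> t \in K.

Definition verts (K : {set {set V}}) : {set V} := \bigcup_(s in K) s.

(* k-wedge sum: vertices v of F1 are identified with f v in F2 *)
Definition wedge_map (F1 : {set V}) (f : V -> V) (v : V) : V :=
  if v \in F1 then f v else v.

Definition wedge (K1 K2 : {set {set V}}) (F1 : {set V}) (f : V -> V) : {set {set V}} :=
  (fun s : {set V} => wedge_map F1 f @: s) @: (K1 :|: K2).

Definition is_orientation (K : {set {set V}}) (o : {set V} -> seq V) : Prop :=
  forall s, s \in K -> perm_eq (o s) (enum s).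

(* number of inversions of s relative to t; its parity is that of the
   permutation carrying t to s *)
Definition ninv (s t : seq V) : nat :=
  #|[set p : V * V | [&& p.1 \in s, p.2 \in s, index p.1 s < index p.2 s
                        & index p.2 t < index p.1 t]]|.

(* sign bit (true = negative) of sgn([A], d[B]) for A \subset B, #|B| = #|A|+1:
   j = position of the removed vertex in the ordering of B, and the induced
   orientation of A is the ordering of B with that vertex removed. *)
Definition sgnbit (o : {set V} -> seq V) (A B : {set V}) : bool :=
  let j := find (fun x => x \notin A) (o B) in
  let ind := [seq x <- o B | x \in A] in
  odd (j + ninv (o A) ind).

Definition esign (o : {set V} -> seq V) (A B : {set V}) : bool :=
  if #|A| < #|B| then sgnbit o A B else sgnbit o B A.

Definition Badj (K : {set {set V}}) (i : nat) (A B : {set V}) : bool :=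
  [&& A \in K, B \in K &
   [&& #|A| == i.+1, #|B| == i.+2 & A \subset B]
   || [&& #|B| == i.+1, #|A| == i.+2 & B \subset A]].

Definition balanced (K : {set {set V}}) (o : {set V} -> seq V) (i : nat) : Prop :=
  forall c : seq {set V}, uniq c -> 2 < size c -> cycle (Badj K i) c ->
    ~~ odd (sumn (map (fun p => nat_of_bool (esign o p.1 p.2)) (zip c (rot 1 c)))).

End SC.

(* Main.v *)
Require Import Defs.
From mathcomp Require Import all_boot zify.
Set Implicit Arguments. Unset Strict Implicit. Unset Printing Implicit Defensive.

Section Ninv.
Variable V : finType.
Implicit Types s t u : seq V.

Definition inv3 (s t : seq V) (p : V * V) : bool :=
  [&& p.1 \in s, p.2 \in s, index p.1 s < index p.2 s & index p.2 t < index p.1 t].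

Lemma ninvE s t : ninv s t = \sum_p inv3 s t p.
Proof.
rewrite /ninv -sum1_card big_mkcond /=; apply: eq_bigr => p _.
by rewrite inE /inv3; case: andP.
Qed.

Lemma ltn_swap i j : i != j -> (j < i) = ~~ (i < j).
Proof. by move=> h; rewrite ltnNge leq_eqVlt (negbTE h). Qed.

Lemma index_neq s x y : x \in s -> y \in s -> x != y -> index x s != index y s.
Proof.
move=> hx hy; apply: contra => /eqP e; apply/eqP.
by rewrite -(nth_index x hx) e nth_index.
Qed.

Definition w2 s t u (p : V * V) : bool :=
  [&& p.1 \in s, p.2 \in s, index p.1 s < index p.2 s,
      index p.2 t < index p.1 t & index p.1 u < index p.2 u].

Lemma ninv_tr s t u : s =i t -> s =i u ->
  ninv s u + 2 * \sum_p w2 s t u p = ninv s t + ninv t u.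
Proof.
move=> est esu.
have sw : \sum_p w2 s t u p = \sum_p w2 s t u (p.2, p.1).
  by rewrite (reindex_inj (h := fun p : V * V => (p.2, p.1))) //=; case=> a b [c d] [-> ->].
rewrite !ninvE mul2n -addnn {2}sw addnA -!big_split /=.
apply: eq_bigr => [[x y]] _; rewrite /inv3 /w2 /= -!est.
case hx: (x \in s); case hy: (y \in s) => //=.
have hxt : x \in t by rewrite -est. have hyt : y \in t by rewrite -est.
have hxu : x \in u by rewrite -esu. have hyu : y \in u by rewrite -esu.
case: (eqVneq x y) => [->|nxy]; first by rewrite !ltnn.
rewrite (ltn_swap (index_neq hx hy nxy)) (ltn_swap (index_neq hxt hyt nxy)).
rewrite (ltn_swap (index_neq hxu hyu nxy)).
by case: (index x s < index y s); case: (index x t < index y t);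
   case: (index x u < index y u).
Qed.

Lemma ninv_odd s t u : s =i t -> s =i u ->
  odd (ninv s u) = odd (ninv s t) (+) odd (ninv t u).
Proof.
move=> est esu; rewrite -oddD -(ninv_tr est esu) oddD.
by rewrite oddM /= addbF.
Qed.

Lemma ninv_ss s : ninv s s = 0.
Proof.
rewrite ninvE big1 // => p _; rewrite /inv3.
by case: (ltngtP (index p.1 s) (index p.2 s)); rewrite !andbF.
Qed.

Lemma ninv_odd_sym s t : s =i t -> odd (ninv s t) = odd (ninv t s).
Proof.
move=> est; have := ninv_odd est (fun _ => erefl).
by rewrite ninv_ss /=; case: (odd (ninv s t)); case: (odd (ninv t s)).
Qed.


Lemma index_map_in (g : V -> V) s x : {in s &, injective g} -> x \in s ->
  index (g x) (map g s) = index x s.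
Proof.
elim: s => [//|y s IH] inj /=; rewrite in_cons => hx.
case: (eqVneq y x) => [->|nyx]; first by rewrite eqxx.
have hx' : x \in s by move: hx; rewrite eq_sym (negbTE nyx).
have -> : (g y == g x) = false.
  apply/negbTE; apply: contra nyx => /eqP e; apply/eqP.
  by apply: inj; rewrite ?in_cons ?eqxx ?hx' ?orbT.
congr S; apply: IH => // a b ha hb; apply: inj; by rewrite in_cons ?ha ?hb orbT.
Qed.

Lemma ninv_map (g : V -> V) s t : {in s &, injective g} -> s =i t ->
  ninv (map g s) (map g t) = ninv s t.
Proof.
move=> inj est.
have injt : {in t &, injective g} by move=> a b; rewrite -!est; apply: inj.
rewrite /ninv.
set S := [set p : V * V | [&& p.1 \in s, p.2 \in s, _ & _]].
have injS : {in S &, injective (fun p : V * V => (g p.1, g p.2))}.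
  move=> [x y] [x' y']; rewrite !inE /=.
  case/and4P => hx hy _ _; case/and4P => hx' hy' _ _ [e1 e2].
  by rewrite (inj _ _ hx hx' e1) (inj _ _ hy hy' e2).
rewrite -(card_in_imset injS); apply: eq_card => -[a b].
  rewrite [in LHS]inE /=; apply/idP/imsetP.
    case/and4P => /mapP [x hx ->] /mapP [y hy ->].
    have hxt : x \in t by rewrite -est. have hyt : y \in t by rewrite -est.
    rewrite !index_map_in // => h1 h2.
    by exists (x, y) => //; rewrite inE /= hx hy h1 h2.
  case=> [[x y]]; rewrite inE /= => /and4P [hx hy h1 h2] [-> ->].
  have hxt : x \in t by rewrite -est. have hyt : y \in t by rewrite -est.
  by rewrite !map_f // !index_map_in // h1 h2.
Qed.

Lemma ninv_cons v s t : v \notin s -> s =i t -> ninv (v :: s) (v :: t) = ninv s t.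
Proof.
move=> vs est; rewrite !ninvE; apply: eq_bigr => [[x y]] _.
rewrite /inv3 /= !in_cons.
case: (eqVneq x v) => [->|nxv].
  by rewrite (negbTE vs) /= ?ltn0 ?andbF.
case: (eqVneq y v) => [->|nyv].
  by rewrite (negbTE vs) /= ?ltn0 ?andbF.
by rewrite /= !ltnS.
Qed.

Lemma index_filter_lt (P : pred V) t x y : x \in filter P t -> y \in filter P t ->
  index x (filter P t) < index y (filter P t) -> index x t < index y t.
Proof.
elim: t => [//|z t IH] /=.
case Pz: (P z) => /=.
  rewrite !in_cons.
  case: (eqVneq z x) => [//|nzx] /=.
    by case: (eqVneq z y).
  case: (eqVneq z y) => [//|nzy] /=.
  by rewrite ltnS; exact: IH.
move=> hx hy h.
have nzx : z != x by apply: contraFneq Pz => ->; move: hx; rewrite mem_filter; case/andP.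
have nzy : z != y by apply: contraFneq Pz => ->; move: hy; rewrite mem_filter; case/andP.
by rewrite (negbTE nzx) (negbTE nzy) ltnS IH.
Qed.

Lemma ninv_head v t : uniq t -> v \in t ->
  ninv (v :: filter (predC1 v) t) t = index v t.
Proof.
move=> ut vt; set r := filter (predC1 v) t.
rewrite /ninv.
have -> : [set p : V * V | [&& p.1 \in v :: r, p.2 \in v :: r,
            index p.1 (v :: r) < index p.2 (v :: r) & index p.2 t < index p.1 t]]
          = [set (v, y) | y in [set y in take (index v t) t]].
  apply/setP => [[x y]]; rewrite inE /=; apply/idP/imsetP.
    case/and4P; rewrite !in_cons /=.
    case: (eqVneq x v) => [->|nxv] hx.
      case: (eqVneq y v) => [->|nyv] /=; first by [].
      move=> hy _ h; exists y => //; rewrite inE in_take //.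
      by move: hy; rewrite mem_filter; case/andP.
    case: (eqVneq y v) => [->|nyv] /=; first by [].
    move=> hy; rewrite ?ltnS => h1 h2.
    have := index_filter_lt hx hy h1; rewrite ltnNge (ltnW h2) //.
  case=> y'; rewrite inE => hy' [-> ->].
  have yt : y' \in t by apply: mem_take hy'.
  have hlt : index y' t < index v t by rewrite -in_take.
  have nyv : y' != v by apply: contraTneq hlt => ->; rewrite ltnn.
  rewrite !in_cons eqxx /= (negbTE nyv) eq_sym (negbTE nyv) hlt /= mem_filter /= nyv yt.
  by [].
rewrite card_imset; last by move=> a b [].
rewrite cardsE (card_uniqP _) ?take_uniq // size_take index_mem vt //.
Qed.


Lemma sgnbit_map (g : V -> V) (p q : {set V} -> seq V) (A B : {set V}) :
  A \subset B -> #|B| = #|A|.+1 -> {in B &, injective g} ->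
  perm_eq (p A) (enum A) -> perm_eq (p B) (enum B) ->
  perm_eq (q (g @: A)) (enum (g @: A)) -> perm_eq (q (g @: B)) (enum (g @: B)) ->
  sgnbit q (g @: A) (g @: B) =
  sgnbit p A B (+) odd (ninv (q (g @: A)) (map g (p A)))
               (+) odd (ninv (q (g @: B)) (map g (p B))).
Proof.
move=> sAB cB inj pA pB qA qB.
have : #|B :\: A| == 1 by rewrite cardsDS // cB subSnn.
case/cards1P => v ev.
have vBA : v \in B :\: A by rewrite ev set11.
have vB : v \in B by move: vBA; rewrite inE; case/andP.
have vA : v \notin A by move: vBA; rewrite inE; case/andP.
have BA x : x \in B -> (x \notin A) = (x == v).
  move=> xB; have : (x \in B :\: A) = (x == v) by rewrite ev inE.
  by rewrite inE xB andbT.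
set w := g v.
have gBA z : z \in g @: B -> (z \notin g @: A) = (z == w).
  case/imsetP => x xB ->; case: (eqVneq x v) => [->|nxv].
    rewrite eqxx; apply/imsetP => -[a aA e].
    have := inj _ _ vB (subsetP sAB a aA) e => eva.
    by move: vA; rewrite eva aA.
  have xA : x \in A by move: (BA x xB); rewrite (negbTE nxv) => /negbFE.
  rewrite imset_f //=; apply/esym/negbTE; apply: contra nxv => /eqP e.
  by apply/eqP; apply: inj.
set pa := p A; set pb := p B; set qa := q (g @: A); set qb := q (g @: B).
have mpb : pb =i B by move=> x; rewrite (perm_mem pB) mem_enum.
have mpa : pa =i A by move=> x; rewrite (perm_mem pA) mem_enum.
have mqb : qb =i g @: B by move=> x; rewrite (perm_mem qB) mem_enum.
have mqa : qa =i g @: A by move=> x; rewrite (perm_mem qA) mem_enum.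
have upb : uniq pb by rewrite (perm_uniq pB) enum_uniq.
have uqb : uniq qb by rewrite (perm_uniq qB) enum_uniq.
have vpb : v \in pb by rewrite mpb.
have wB : w \in g @: B by rewrite imset_f.
have wqb : w \in qb by rewrite mqb.
rewrite /sgnbit.
have -> : find (fun x => x \notin A) pb = index v pb.
  by apply: eq_in_find => x; rewrite mpb => /BA.
have -> : find (fun x => x \notin g @: A) qb = index w qb.
  by apply: eq_in_find => x; rewrite mqb => /gBA.
have -> : [seq x <- pb | x \in A] = filter (predC1 v) pb.
  by apply: eq_in_filter => x; rewrite mpb /= => /BA <-; rewrite negbK.
have -> : [seq x <- qb | x \in g @: A] = filter (predC1 w) qb.
  by apply: eq_in_filter => x; rewrite mqb /= => /gBA <-; rewrite negbK.
set rp := filter (predC1 v) pb; set rq := filter (predC1 w) qb.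
rewrite -(ninv_head upb vpb) -(ninv_head uqb wqb) -/rp -/rq.
have injb : {in pb &, injective g} by move=> x y; rewrite !mpb; apply: inj.
have inja : {in pa &, injective g} by move=> x y; rewrite !mpa => hx hy; apply: inj; apply: (subsetP sAB).
have mrp : rp =i A.
  move=> x; rewrite mem_filter /= mpb; case xB: (x \in B).
    by rewrite andbT -(BA x xB) negbK.
  by rewrite andbF; apply/esym; apply: contraFF xB; apply: (subsetP sAB).
have injr : {in v :: rp &, injective g}.
  move=> x y; rewrite !in_cons !mrp => hx hy; apply: inj.
    by case/orP: hx => [/eqP ->|/(subsetP sAB)].
  by case/orP: hy => [/eqP ->|/(subsetP sAB)].
have e1 : v :: rp =i pb.
  move=> x; rewrite in_cons mrp mpb; case: (eqVneq x v) => [->|nxv] /=; first by [].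
  case xB: (x \in B); first by rewrite -(negbK (x \in A)) (BA x xB) (negbTE nxv).
  by apply: contraFF xB; apply: (subsetP sAB).
have e2 : pa =i rp by move=> x; rewrite mpa mrp.
rewrite -(ninv_map injr e1) -(ninv_map inja e2) /=.
rewrite -/w.
set R := map g rp; set PA := map g pa; set PB := map g pb.
have mR : R =i g @: A.
  move=> z; apply/mapP/imsetP => -[x]; rewrite ?mrp => hx ->; exists x => //.
  by rewrite mrp.
have mPA : PA =i g @: A.
  move=> z; apply/mapP/imsetP => -[x]; rewrite ?mpa => hx ->; exists x => //.
  by rewrite mpa.
have mPB : PB =i g @: B.
  move=> z; apply/mapP/imsetP => -[x]; rewrite ?mpb => hx ->; exists x => //.
  by rewrite mpb.
have mrq : rq =i g @: A.
  move=> z; rewrite mem_filter /= mqb; case zB: (z \in g @: B).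
    by rewrite andbT -(gBA z zB) negbK.
  by rewrite andbF; apply/esym; apply: contraFF zB; apply: (subsetP (imsetS g sAB)).
have mwR : w :: R =i g @: B.
  move=> z; rewrite in_cons mR; case: (eqVneq z w) => [->|nzw] //=.
  case zB: (z \in g @: B); first by rewrite -(negbK (z \in _)) (gBA z zB) (negbTE nzw).
  by apply: contraFF zB; apply: (subsetP (imsetS g sAB)).
have mwrq : w :: rq =i g @: B.
  move=> z; rewrite in_cons mrq; case: (eqVneq z w) => [->|nzw] //=.
  case zB: (z \in g @: B); first by rewrite -(negbK (z \in _)) (gBA z zB) (negbTE nzw).
  by apply: contraFF zB; apply: (subsetP (imsetS g sAB)).
have wrq : w \notin rq by rewrite mem_filter /= eqxx.
rewrite !oddD.
rewrite (@ninv_odd (w :: rq) (w :: R) qb); last 2 first.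
  by move=> z; rewrite mwrq mwR. by move=> z; rewrite mwrq mqb.
rewrite ninv_cons //; last by move=> z; rewrite mrq mR.
rewrite (@ninv_odd (w :: R) PB qb); last 2 first.
  by move=> z; rewrite mwR mPB. by move=> z; rewrite mwR mqb.
rewrite (@ninv_odd qa PA rq); last 2 first.
  by move=> z; rewrite mqa mPA. by move=> z; rewrite mqa mrq.
rewrite (@ninv_odd PA R rq); last 2 first.
  by move=> z; rewrite mPA mR. by move=> z; rewrite mPA mrq.
rewrite (@ninv_odd_sym rq R); last by move=> z; rewrite mrq mR.
rewrite (@ninv_odd_sym PB qb); last by move=> z; rewrite mPB mqb.
by case: (odd (ninv R rq)); case: (odd (ninv (w :: R) PB)); case: (odd (ninv qb PB));
   case: (odd (ninv qa PA)); case: (odd (ninv PA R)).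
Qed.

End Ninv.

Section Graph.
Variable T : eqType.
Variable adj : rel T.
Variable e : T -> T -> nat.

Fixpoint psum x l := if l is y :: l' then e x y + psum y l' else 0.
Definition csum c := sumn (map (fun p => e p.1 p.2) (zip c (rot 1 c))).

Lemma psum_rcons x y l :
  sumn (map (fun p => e p.1 p.2) (zip (x :: l) (rcons l y))) = psum x (rcons l y).
Proof. by elim: l x => [|z l IH] x //=; rewrite IH. Qed.

Lemma csum_cons x l : csum (x :: l) = psum x (rcons l x).
Proof. by rewrite /csum rot1_cons psum_rcons. Qed.

Lemma psum_cat x l1 l2 : psum x (l1 ++ l2) = psum x l1 + psum (last x l1) l2.
Proof. by elim: l1 x => [|y l1 IH] x //=; rewrite IH addnA. Qed.

Lemma drop_zip (A B : Type) n (s : seq A) (t : seq B) :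
  zip (drop n s) (drop n t) = drop n (zip s t).
Proof.
elim: s t n => [|x s IH] [|y t] [|n] //=; first [exact: IH | by case: (drop _ _)].
Qed.

Lemma take_zip (A B : Type) n (s : seq A) (t : seq B) :
  zip (take n s) (take n t) = take n (zip s t).
Proof.
elim: s t n => [|x s IH] [|y t] [|n] //=; first [by rewrite IH | by case: (take _ _)].
Qed.

Lemma zip_rot (A B : Type) n (s : seq A) (t : seq B) : size s = size t ->
  zip (rot n s) (rot n t) = rot n (zip s t).
Proof.
move=> est; rewrite /rot zip_cat ?size_drop ?est // drop_zip take_zip.
by [].
Qed.

Lemma csum_rot n c : csum (rot n c) = csum c.
Proof.
by rewrite /csum rot_rot zip_rot ?size_rot // map_rot sumn_rot.
Qed.

Lemma count_rot (P : pred T) n c : count P (rot n c) = count P c.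
Proof. by rewrite /rot count_cat addnC -count_cat cat_take_drop. Qed.

Lemma last_rev_belast (y : T) p : last (last y p) (rev (belast y p)) = y.
Proof. by case: p => [|z p] //=; rewrite rev_cons last_rcons. Qed.

Hypothesis esym : forall x y, adj x y -> e x y = e y x.
Hypothesis hsym : forall x y, adj x y -> adj y x.

Lemma psum_rev x p : path adj x p -> psum (last x p) (rev (belast x p)) = psum x p.
Proof.
elim: p x => [|y p IH] x //= /andP [axy hp].
rewrite rev_cons -cats1 psum_cat IH // last_rev_belast /= addn0 addnC.
by rewrite (esym axy).
Qed.

Lemma dup_split (c : seq T) : ~~ uniq c ->
  exists a x b d, c = a ++ x :: b ++ x :: d.
Proof.
elim: c => [//|y c IH] /=; rewrite negb_and negbK.
case yc: (y \in c) => /=.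
  by move=> _; case/splitPr: yc => b d; exists [::], y, b, d.
by case/IH => a [x [b [d ->]]]; exists (y :: a), x, b, d.
Qed.

Hypothesis irr : forall x, ~~ adj x x.

Lemma walks_even :
  (forall c, uniq c -> 2 < size c -> cycle adj c -> ~~ odd (csum c)) ->
  forall c, cycle adj c -> ~~ odd (csum c).
Proof.
move=> H c; move: {2}(size c) (leqnn (size c)) => n.
elim: n c => [|n IH] c.
  by rewrite leqn0 => /nilP ->.
move=> sc cc; case uc: (uniq c).
  case: (ltnP 2 (size c)) => [h|]; first exact: H.
  case: c uc sc cc => [|x [|y [|z c]]] //= _ _.
    by rewrite andbT (negbTE (irr x)).
  case/and3P => axy _ _.
  by rewrite csum_cons /= addn0 (esym axy) addnn odd_double.
case: (dup_split (negbT uc)) => a [x [b [d ec]]].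
have -> : csum c = csum (x :: b ++ x :: d ++ a).
  by rewrite -(csum_rot (size a)) ec rot_size_cat /= -catA.
have cc' : cycle adj (x :: b ++ x :: d ++ a).
  by rewrite -(rot_cycle (size a)) ec rot_size_cat /= -catA in cc.
rewrite csum_cons.
have -> : rcons (b ++ x :: d ++ a) x = rcons b x ++ rcons (d ++ a) x.
  by clear; elim: b => //= z b ->.
rewrite psum_cat last_rcons oddD -!csum_cons.
move: cc'; rewrite /cycle.
have -> : rcons (b ++ x :: d ++ a) x = rcons b x ++ rcons (d ++ a) x.
  by clear; elim: b => //= z b ->.
rewrite cat_path last_rcons => /andP [c1 c2].
have sz : size c = (size a + size b + size d).+2 by rewrite ec size_cat /= size_cat /=; lia.
rewrite (negbTE (IH (x :: b) _ c1)) ?(negbTE (IH (x :: d ++ a) _ c2)) //=.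
  rewrite size_cat; lia.
lia.
Qed.


Lemma rcons_split (l1 l2 : seq T) z y :
  rcons (l1 ++ z :: l2) y = rcons l1 z ++ rcons l2 y.
Proof. by elim: l1 => //= w l1 ->. Qed.

Section Glue.
Variables P1 P2 : pred T.
Hypothesis hcov : forall x y, adj x y -> P1 x || P2 x.
Hypothesis hsep1 : forall x y, adj x y -> P1 x -> ~~ P2 x -> P2 y -> P1 y.
Hypothesis hsep2 : forall x y, adj x y -> P2 x -> ~~ P1 x -> P1 y -> P2 y.
Hypothesis hconn : forall s t s' t', adj s s' -> adj t t' ->
  P1 s -> P2 s -> P1 t -> P2 t ->
  exists p, [/\ path adj s p, last s p = t & all (fun z => P1 z && P2 z) p].
Hypothesis h1 : forall c, cycle adj c -> all P1 c -> ~~ odd (csum c).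
Hypothesis h2 : forall c, cycle adj c -> all P2 c -> ~~ odd (csum c).

Lemma cov d z : cycle adj d -> z \in d -> P1 z || P2 z.
Proof. by move=> cd zd; apply: (hcov (next_cycle cd zd)). Qed.

Lemma glue_step y a x0 r' t w n :
  (forall c, count (predC P1) c <= n -> cycle adj c -> ~~ odd (csum c)) ->
  count (predC P1) (y :: rcons a x0 ++ rcons r' t ++ w) <= n.+1 ->
  cycle adj (y :: rcons a x0 ++ rcons r' t ++ w) ->
  P1 y -> all P1 a -> ~~ P1 x0 -> all (predC P1) r' -> P1 t ->
  ~~ odd (csum (y :: rcons a x0 ++ rcons r' t ++ w)).
Proof.
move=> IH hn cc Py aa nx0 ar' Pt.
set s := last y a; set u := belast y a; set r := x0 :: r'.
have E : y :: rcons a x0 ++ rcons r' t ++ w = u ++ s :: r ++ t :: w.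
  by rewrite !cat_rcons -cat_cons (lastI y a) cat_rcons.
set c1 := s :: r ++ t :: w ++ u.
have R1 : rot (size u) (y :: rcons a x0 ++ rcons r' t ++ w) = c1.
  by rewrite E rot_size_cat /c1 /= -catA.
have cc1 : cycle adj c1 by rewrite -R1 rot_cycle.
rewrite -(csum_rot (size u)) R1.
have hn1 : count (predC P1) c1 <= n.+1 by rewrite -R1 count_rot.
have Ps : P1 s.
  have : s \in y :: a by apply: mem_last.
  by rewrite in_cons => /orP [/eqP ->|/(allP aa)].
move: cc1; rewrite /c1 /cycle rcons_split cat_path last_rcons => /andP [pr pw].
have cc1 : cycle adj c1 by rewrite /c1 /cycle rcons_split cat_path last_rcons pr.
have asx : adj s x0 by case/andP: pr.
have rP2 z : z \in r -> P2 z.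
  move=> zr; have zc : z \in c1 by rewrite /c1 in_cons mem_cat zr orbT.
  have nz : ~~ P1 z.
    by move: zr; rewrite in_cons => /orP [/eqP ->|/(allP ar')].
  by case/orP: (cov cc1 zc) => // h; rewrite h in nz.
have Ps2 : P2 s.
  apply/negPn/negP => ns; have := hsep1 asx Ps ns (rP2 x0 (mem_head _ _)).
  by rewrite (negbTE nx0).
set t' := last x0 r'.
have at't : adj t' t.
  by move: pr; rewrite /r -cats1 cat_path /= andbT => /andP [_].
have Pt2 : P2 t.
  apply: (hsep2 at't (rP2 _ (mem_last _ _))) => //.
  have : t' \in r by apply: mem_last.
  by rewrite in_cons => /orP [/eqP ->|/(allP ar')].
case: (hconn asx (hsym at't) Ps Ps2 Pt Pt2) => p [pp lp ap].
set c2 := s :: p ++ w ++ u.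
have cc2 : cycle adj c2.
  by rewrite /c2 /cycle rcons_cat cat_path pp lp.
set L := t :: rev (belast s p) ++ r.
have ccL : cycle adj L.
  rewrite /L /cycle rcons_cat cat_path -{1}lp rev_path.
  rewrite -{1}lp last_rev_belast pr andbT.
  by apply: sub_path pp => a' b' /hsym.
have aL : all P2 L.
  rewrite /L /= Pt2 all_cat; apply/andP; split=> //; first apply/andP; split.
    apply/allP => z; rewrite mem_rev => /mem_belast; rewrite in_cons.
    by case/orP => [/eqP ->|/(allP ap) /andP []].
  by apply/allP => z /rP2.
have hc2 : count (predC P1) c2 <= n.
  move: hn1; rewrite /c1 /c2 /= Ps /= !count_cat /= Pt nx0 /=.
  have -> : count (predC P1) p = 0.
    by apply/eqP; rewrite -leqn0 leqNgt -has_count; apply/hasPn => z /(allP ap) /andP [Pz _] /=; rewrite Pz.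
  rewrite count_cat !add0n add1n ltnS; apply: leq_trans; exact: leq_addl.
have o2 := IH _ hc2 cc2.
have oL := h2 ccL aL.
move: o2 oL; rewrite /c1 /c2 /L !csum_cons.
have -> : psum s (rcons (p ++ w ++ u) s) = psum s p + psum t (rcons (w ++ u) s).
  by rewrite rcons_cat psum_cat lp.
have -> : psum t (rcons (rev (belast s p) ++ r) t) = psum s p + psum s (rcons r t).
  rewrite rcons_cat psum_cat.
  have -> : last t (rev (belast s p)) = s by rewrite -lp last_rev_belast.
  have -> : psum t (rev (belast s p)) = psum s p by rewrite -lp psum_rev.
  by [].
have -> : psum s (rcons (r ++ t :: w ++ u) s) = psum s (rcons r t) + psum t (rcons (w ++ u) s).
  by rewrite rcons_split psum_cat last_rcons.
set X := psum s p; set Y := psum s (rcons r t); set Z := psum t (rcons (w ++ u) s).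
by rewrite (oddD X Z) (oddD X Y) (oddD Y Z); case: (odd X); case: (odd Y); case: (odd Z).
Qed.


Lemma glue c : cycle adj c -> ~~ odd (csum c).
Proof.
move: {2}(count (predC P1) c) (leqnn (count (predC P1) c)) => n.
elim: n c => [|n IH] c hn cc.
  apply: (h1 cc); apply/allP => z zc.
  have : ~~ has (predC P1) c by rewrite has_count -leqNgt.
  by move/hasPn/(_ z zc); rewrite /= negbK.
case a1: (all P1 c); first exact: (h1 cc a1).
case a2: (all P2 c); first exact: (h2 cc a2).
move/negbT/allPn: a2 => [y yc ny2].
have Py : P1 y by case/orP: (cov cc yc) => // h; rewrite h in ny2.
move/negbT/allPn: a1 => [x xc nx1].
case: (rot_to yc) => i l er.
rewrite -(csum_rot i) er.
have cc0 : cycle adj (y :: l) by rewrite -er rot_cycle.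
have hn0 : count (predC P1) (y :: l) <= n.+1 by rewrite -er count_rot.
have xl : x \in l.
  have : x \in y :: l by rewrite -er mem_rot.
  rewrite in_cons => /orP [/eqP exy|//]; by rewrite exy Py in nx1.
have hl : has (predC P1) l by apply/hasP; exists x.
move: cc0 hn0; case: (split_find hl) => x0 a b nx0 ha cc0 hn0.
have aa : all P1 a by apply/allP => z /(hasPn ha); rewrite /= negbK.
case hb: (has P1 b).
  move: cc0 hn0; case: (split_find hb) => t r' w Pt hr' cc0 hn0.
  apply: (glue_step IH hn0 cc0 Py aa nx0 _ Pt).
  by apply/allP => z /(hasPn hr').
exfalso.
set zl := last x0 b.
have azy : adj zl y.
  move: cc0; rewrite /cycle -cats1 cat_path => /andP [_].
  by rewrite /= last_cat last_rcons andbT.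
have nzl : ~~ P1 zl.
  have : zl \in x0 :: b by apply: mem_last.
  rewrite in_cons => /orP [/eqP ->//|/(hasPn (negbT hb))] //.
have zlc : zl \in y :: (rcons a x0 ++ b).
  rewrite in_cons mem_cat.
  have : zl \in x0 :: b by apply: mem_last.
  by rewrite in_cons mem_rcons in_cons => /orP [->|->]; rewrite ?orbT.
have P2zl : P2 zl by case/orP: (cov cc0 zlc) => // h; rewrite h in nzl.
by have := hsep2 azy P2zl nzl Py; rewrite (negbTE ny2).
Qed.

End Glue.
End Graph.

Section Gen.
Variable V : finType.
Implicit Types K : {set {set V}}.

Definition Es (o : {set V} -> seq V) (A B : {set V}) : nat := esign o A B.

Lemma Badj_irr K i (A : {set V}) : ~~ Badj K i A A.
Proof.
rewrite /Badj; apply/negP => /and3P [_ _ /orP [] /and3P [/eqP -> /eqP h _]]; lia.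
Qed.

Lemma Badj_sym K i (A B : {set V}) : Badj K i A B -> Badj K i B A.
Proof. by rewrite /Badj => /and3P [-> -> /orP [h|h]]; rewrite h ?orbT. Qed.

Lemma Badj_card K i (A B : {set V}) : Badj K i A B -> #|A| != #|B|.
Proof.
by rewrite /Badj => /and3P [_ _ /orP [] /and3P [/eqP -> /eqP -> _]]; apply/eqP; lia.
Qed.

Lemma esign_sym o (A B : {set V}) : #|A| != #|B| -> esign o A B = esign o B A.
Proof.
rewrite /esign => h; case: (ltngtP #|A| #|B|) => //.
by move=> e; rewrite e eqxx in h.
Qed.

Lemma Es_sym K i o (A B : {set V}) : Badj K i A B -> Es o A B = Es o B A.
Proof. by move=> h; rewrite /Es esign_sym // (Badj_card h). Qed.

Lemma walks K o i : balanced K o i ->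
  forall c, cycle (Badj K i) c -> ~~ odd (csum (Es o) c).
Proof.
move=> hb; apply: walks_even.
- by move=> A B; apply: Es_sym.
- by move=> x; apply: Badj_irr.
- exact: hb.
Qed.

Lemma zip_map2 (A B : Type) (G : A -> B) (s t : seq A) :
  zip (map G s) (map G t) = map (fun p => (G p.1, G p.2)) (zip s t).
Proof. by elim: s t => [|x s IH] [|y t] //=; rewrite IH. Qed.

Lemma sumn_pairs (l : seq ({set V} * {set V})) (f g : {set V} -> nat) :
  sumn (map (fun p => f p.1 + g p.2) l) = sumn (map f (unzip1 l)) + sumn (map g (unzip2 l)).
Proof. by elim: l => [|p l IH] //=; rewrite IH addnACA. Qed.

Lemma odd_pairs (l : seq ({set V} * {set V})) (F G : {set V} -> {set V} -> bool)
  (d : {set V} -> bool) :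
  (forall p, p \in l -> F p.1 p.2 = G p.1 p.2 (+) d p.1 (+) d p.2) ->
  odd (sumn (map (fun p => nat_of_bool (F p.1 p.2)) l)) =
  odd (sumn (map (fun p => nat_of_bool (G p.1 p.2)) l))
  (+) odd (sumn (map (fun p => nat_of_bool (d p.1) + nat_of_bool (d p.2)) l)).
Proof.
elim: l => [|p l IH] //= h.
rewrite !oddD IH; last by move=> q ql; apply: h; rewrite in_cons ql orbT.
rewrite h ?mem_head // !oddb.
by case: (G p.1 p.2); case: (d p.1); case: (d p.2);
   case: (odd (sumn _)); case: (odd (sumn _)).
Qed.

Section Map.
Variables (K K' : {set {set V}}) (i : nat) (o o' : {set V} -> seq V) (g : V -> V).
Hypothesis oK : is_orientation K o.
Hypothesis oK' : is_orientation K' o'.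
Hypothesis injg : forall B, B \in K' -> {in B &, injective g}.
Hypothesis gK : forall s, s \in K' -> g @: s \in K.

Definition dl (X : {set V}) := odd (ninv (o (g @: X)) (map g (o' X))).

Lemma edge_map (A B : {set V}) : Badj K' i A B ->
  esign o (g @: A) (g @: B) = esign o' A B (+) dl A (+) dl B.
Proof.
move=> h; have h' := h; move: h'; rewrite /Badj => /and3P [AK BK].
have cA : #|g @: A| = #|A| by rewrite card_in_imset //; apply: injg.
have cB : #|g @: B| = #|B| by rewrite card_in_imset //; apply: injg.
rewrite /esign cA cB.
case/orP => /and3P [/eqP ca /eqP cb sub].
  rewrite ca cb ltnSn.
  rewrite (@sgnbit_map _ g o' o A B) //; first by rewrite ca cb.
  - exact: injg.
  - exact: oK'. - exact: oK'. - by apply: oK; apply: gK. - by apply: oK; apply: gK.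
rewrite ca cb ltnNge leqnSn /=.
rewrite (@sgnbit_map _ g o' o B A) //; first by rewrite /dl; case: (sgnbit o' B A);
  case: (odd (ninv _ _)); case: (odd (ninv _ _)).
- by rewrite ca cb.
- exact: injg.
- exact: oK'. - exact: oK'. - by apply: oK; apply: gK. - by apply: oK; apply: gK.
Qed.

Lemma Badj_map (A B : {set V}) : Badj K' i A B -> Badj K i (g @: A) (g @: B).
Proof.
move=> h; have h' := h; move: h'; rewrite /Badj => /and3P [AK BK].
have cA : #|g @: A| = #|A| by rewrite card_in_imset //; apply: injg.
have cB : #|g @: B| = #|B| by rewrite card_in_imset //; apply: injg.
by rewrite (gK AK) (gK BK) cA cB => /orP [] /and3P [-> -> s]; rewrite (imsetS g s) ?orbT.
Qed.

Lemma cycle_map_K d : cycle (Badj K' i) d -> cycle (Badj K i) (map (fun s : {set V} => g @: s) d).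
Proof.
by move=> cd; rewrite cycle_map; apply: sub_cycle cd => A B /Badj_map.
Qed.

Lemma csum_map d : cycle (Badj K' i) d ->
  odd (csum (Es o) (map (fun s : {set V} => g @: s) d)) = odd (csum (Es o') d).
Proof.
move=> cd; rewrite /csum -map_rot zip_map2 -map_comp /=.
rewrite (@odd_pairs _ (fun A B => esign o (g @: A) (g @: B)) (esign o') dl).
  rewrite (sumn_pairs _ (fun X => nat_of_bool (dl X)) (fun X => nat_of_bool (dl X))) unzip1_zip ?unzip2_zip ?size_rot // map_rot sumn_rot addnn.
  by rewrite odd_double addbF.
move=> [A B] /= hp; apply: edge_map.
move: cd hp; case: d => [//|z l]; rewrite /cycle rot1_cons.
move: {2 4}z => w; elim: l z => [|y l IH] z /=.
  by rewrite andbT => h; rewrite inE => /eqP [-> ->].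
case/andP => h1 h2; rewrite in_cons => /orP [/eqP [-> ->] //|]; exact: IH.
Qed.

End Map.
End Gen.

Section Wedge.
Variables (V : finType) (K1 K2 : {set {set V}}) (k i : nat)
    (F1 F2 : {set V}) (f : V -> V) (o o1 o2 : {set V} -> seq V).
Hypotheses (cK1 : is_complex K1) (cK2 : is_complex K2)
  (dj : [disjoint verts K1 & verts K2])
  (F1K : F1 \in K1) (F2K : F2 \in K2) (cF1 : #|F1| = k.+1) (cF2 : #|F2| = k.+1)
  (fF : f @: F1 = F2) (ki : k <= i.+1)
  (oK : is_orientation (wedge K1 K2 F1 f) o)
  (oK1 : is_orientation K1 o1) (oK2 : is_orientation K2 o2).

Local Notation phi := (wedge_map F1 f).
Local Notation K := (wedge K1 K2 F1 f).

Lemma sub_verts (L : {set {set V}}) (s : {set V}) : s \in L -> s \subset verts L.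
Proof. by move=> sL; apply/subsetP => x xs; apply/bigcupP; exists s. Qed.

Lemma injf : {in F1 &, injective f}.
Proof. by apply/imset_injP; rewrite fF cF1 cF2. Qed.

Lemma F2v (x : V) : x \in F2 -> x \in verts K2.
Proof. by apply: (subsetP (sub_verts F2K)). Qed.

Lemma F1v (x : V) : x \in F1 -> x \in verts K1.
Proof. by apply: (subsetP (sub_verts F1K)). Qed.

Lemma phi2 (x : V) : x \in verts K2 -> phi x = x.
Proof.
move=> xv; rewrite /wedge_map; case: ifP => // xF.
by have := disjointFr dj (F1v xF); rewrite xv.
Qed.

Lemma phi1 (x : V) : x \in F1 -> phi x = f x.
Proof. by rewrite /wedge_map => ->. Qed.

Lemma inj1 : {in verts K1 &, injective phi}.
Proof.
move=> x y xv yv; rewrite /wedge_map.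
have fK2 z : z \in F1 -> f z \in verts K2.
  by move=> zF; apply: F2v; rewrite -fF imset_f.
case: ifP => xF; case: ifP => yF.
- exact: injf.
- by move=> e; have := disjointFr dj yv; rewrite -e fK2.
- by move=> e; have := disjointFr dj xv; rewrite e fK2.
- by [].
Qed.

Lemma inj_s1 (B : {set V}) : B \in K1 -> {in B &, injective phi}.
Proof.
by move=> BK x y xB yB; apply: inj1; apply: (subsetP (sub_verts BK)).
Qed.

Lemma inj_s2 (B : {set V}) : B \in K2 -> {in B &, injective phi}.
Proof.
move=> BK x y xB yB; rewrite !phi2 //; apply: (subsetP (sub_verts BK)) => //.
Qed.

Lemma Phi2 (s : {set V}) : s \in K2 -> phi @: s = s.
Proof.
move=> sK; rewrite -[RHS]imset_id; apply: eq_in_imset => x xs.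
by apply: phi2; apply: (subsetP (sub_verts sK)).
Qed.

Definition S1 := [set phi @: s | s : {set V} in K1].

Lemma Kmem (T : {set V}) : (T \in K) = (T \in S1) || (T \in K2).
Proof.
rewrite /wedge imsetU inE; congr (_ || _).
apply/imsetP/idP => [[s sK ->]|TK]; first by rewrite Phi2.
by exists T; rewrite ?Phi2.
Qed.

Lemma S1K (s : {set V}) : s \in K1 -> phi @: s \in K.
Proof. by move=> sK; rewrite Kmem imset_f. Qed.

Lemma K2K (s : {set V}) : s \in K2 -> s \in K.
Proof. by move=> sK; rewrite Kmem sK orbT. Qed.

Definition psi (T : {set V}) := [set x in verts K1 | phi x \in T].

Lemma psiK (s : {set V}) : s \in K1 -> psi (phi @: s) = s.
Proof.
move=> sK; apply/setP => x; rewrite inE; apply/andP/idP.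
  case=> xv /imsetP [y ys e].
  by rewrite (inj1 xv (subsetP (sub_verts sK) y ys) e).
by move=> xs; rewrite imset_f // (subsetP (sub_verts sK)).
Qed.

Lemma S1_sub (T U : {set V}) : T \in S1 -> U \subset T -> U \in S1.
Proof.
case/imsetP => s sK -> sub.
set s' := [set x in s | phi x \in U].
have s'K : s' \in K1 by apply: (cK1 sK); apply/subsetP => x; rewrite inE; case/andP.
apply/imsetP; exists s' => //; apply/setP => z; apply/idP/imsetP.
  move=> zU; case/imsetP: (subsetP sub z zU) => x xs e.
  by exists x => //; rewrite inE xs -e.
by case=> x; rewrite inE => /andP [_ h] ->.
Qed.

Lemma shared_sub (T : {set V}) : T \in S1 -> T \in K2 -> T \subset F2.
Proof.
case/imsetP => s sK -> TK; apply/subsetP => z /imsetP [x xs ->].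
have xv : x \in verts K1 by apply: (subsetP (sub_verts sK)).
case xF: (x \in F1); first by rewrite phi1 // -fF imset_f.
have : phi x \in verts K2 by apply: (subsetP (sub_verts TK)); rewrite imset_f.
by rewrite /wedge_map xF (disjointFr dj xv).
Qed.

Lemma F2S1 : F2 \in S1.
Proof.
have -> : F2 = phi @: F1.
  by rewrite -fF; apply: eq_in_imset => x xF; rewrite phi1.
exact: imset_f.
Qed.

Lemma sub_shared (T : {set V}) : T \subset F2 -> (T \in S1) && (T \in K2).
Proof.
by move=> sub; rewrite (S1_sub F2S1 sub) (cK2 F2K sub).
Qed.

Lemma Badj_pull (s u : {set V}) : s \in K1 -> u \in K1 ->
  Badj K i (phi @: s) (phi @: u) -> Badj K1 i s u.
Proof.
move=> sK uK; rewrite /Badj sK uK.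
rewrite !card_in_imset; try exact: inj_s1.
have sub a b : a \in K1 -> b \in K1 -> (phi @: a \subset phi @: b) -> a \subset b.
  move=> aK bK /subsetP h; apply/subsetP => x xa.
  case/imsetP: (h _ (imset_f phi xa)) => y yb e.
  by rewrite (inj1 (subsetP (sub_verts aK) x xa) (subsetP (sub_verts bK) y yb) e).
case/and3P => _ _ /orP [] /and3P [-> -> h] /=.
  by rewrite (sub s u).
by rewrite (sub u s) ?orbT.
Qed.

Lemma Badj_K2 (T U : {set V}) : T \in K2 -> U \in K2 -> Badj K i T U -> Badj K2 i T U.
Proof. by move=> TK UK; rewrite /Badj TK UK => /and3P [_ _ ->]. Qed.

Definition P1 := fun T : {set V} => T \in S1.
Definition P2 := fun T : {set V} => T \in K2.

Lemma hcov (T U : {set V}) : Badj K i T U -> P1 T || P2 T.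
Proof. by rewrite /Badj -Kmem => /and3P []. Qed.

Lemma hsep1 (T U : {set V}) : Badj K i T U -> P1 T -> ~~ P2 T -> P2 U -> P1 U.
Proof.
rewrite /Badj /P1 /P2 => /and3P [_ _ /orP [] /and3P [_ _ sub]] PT nT PU.
  by have := cK2 PU sub; rewrite (negbTE nT).
exact: S1_sub PT sub.
Qed.

Lemma hsep2 (T U : {set V}) : Badj K i T U -> P2 T -> ~~ P1 T -> P1 U -> P2 U.
Proof.
rewrite /Badj /P1 /P2 => /and3P [_ _ /orP [] /and3P [_ _ sub]] PT nT PU.
  by have := S1_sub PU sub; rewrite (negbTE nT).
exact: cK2 PT sub.
Qed.

Lemma Bcard (T U : {set V}) : Badj K i T U -> (#|T| == i.+1) || (#|T| == i.+2).
Proof. by rewrite /Badj => /and3P [_ _ /orP [] /and3P [h1 h2 _]]; rewrite ?h1 ?h2 ?orbT. Qed.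

Lemma hconn (s t s' t' : {set V}) : Badj K i s s' -> Badj K i t t' ->
  P1 s -> P2 s -> P1 t -> P2 t ->
  exists p, [/\ path (Badj K i) s p, last s p = t & all (fun z => P1 z && P2 z) p].
Proof.
move=> as_ at_ P1s P2s P1t P2t.
have sF := shared_sub P1s P2s; have tF := shared_sub P1t P2t.
case: (eqVneq s t) => [<-|nst]; first by exists [::].
have cs := Bcard as_; have ct := Bcard at_.
have cF : #|F2| = i.+2.
  case: (ltnP #|F2| i.+2) => [lt|]; last by move=> h; apply/eqP; rewrite eqn_leq h andbT cF2; exact: ki.
  have eF (X : {set V}) : X \subset F2 -> (#|X| == i.+1) || (#|X| == i.+2) -> X = F2.
    move=> XF cX; apply/eqP; rewrite eqEcard XF /=.
    by case/orP: cX => /eqP ->; [exact: lt | exact: ltnW].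
  by rewrite (eF s sF cs) (eF t tF ct) eqxx in nst.
have shF : P1 F2 && P2 F2 by apply: sub_shared.
have adjF (X : {set V}) : X \subset F2 -> X != F2 -> P2 X -> (#|X| == i.+1) || (#|X| == i.+2) ->
    Badj K i X F2 && Badj K i F2 X.
  move=> XF nXF PX cX.
  have lt : #|X| < #|F2| by apply: proper_card; rewrite properEneq nXF XF.
  have cX1 : #|X| == i.+1 by case/orP: cX => // /eqP e; rewrite e cF ltnn in lt.
  by rewrite /Badj (K2K PX) (K2K F2K) cX1 cF eqxx XF /= !orbT.
case: (eqVneq s F2) => [es|nsF].
  have ntF : t != F2 by rewrite -es eq_sym.
  exists [:: t]; split => //=; last by rewrite P1t P2t.
  by rewrite es; case/andP: (adjF t tF ntF P2t ct) => _ ->.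
case: (eqVneq t F2) => [et|ntF].
  exists [:: t]; split => //=; last by rewrite P1t P2t.
  by rewrite et; case/andP: (adjF s sF nsF P2s cs) => ->.
exists [:: F2; t]; split => //=; last by rewrite P1t P2t shF.
case/andP: (adjF s sF nsF P2s cs) => -> _.
by case/andP: (adjF t tF ntF P2t ct) => _ ->.
Qed.


Section Main.
Hypothesis hb1 : balanced K1 o1 i.
Hypothesis hb2 : balanced K2 o2 i.

Lemma h1 c : cycle (Badj K i) c -> all P1 c -> ~~ odd (csum (Es o) c).
Proof.
move=> cc ac.
set d := map psi c.
have ec : map (fun s : {set V} => phi @: s) d = c.
  rewrite /d -map_comp; apply: map_id_in => T Tc /=.
  by case/imsetP: (allP ac T Tc) => s sK ->; rewrite psiK.
have cd : cycle (Badj K1 i) d.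
  rewrite /d cycle_map; apply: (sub_in_cycle (P := P1)) _ _ ac cc.
  move=> T U /imsetP [s sK ->] /imsetP [u uK ->] h /=; rewrite !psiK //.
  exact: Badj_pull.
rewrite -ec (csum_map oK oK1 inj_s1 S1K cd).
exact: (walks hb1 cd).
Qed.

Lemma K2K' (s : {set V}) : s \in K2 -> phi @: s \in K.
Proof. by move=> sK; rewrite Phi2 // K2K. Qed.

Lemma h2 c : cycle (Badj K i) c -> all P2 c -> ~~ odd (csum (Es o) c).
Proof.
move=> cc ac.
have ec : map (fun s : {set V} => phi @: s) c = c.
  by apply: map_id_in => T Tc; apply: Phi2; exact: (allP ac).
have cc2 : cycle (Badj K2 i) c.
  apply: (sub_in_cycle (P := P2)) _ _ ac cc => T U TK UK; exact: Badj_K2.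
rewrite -ec (csum_map oK oK2 inj_s2 K2K' cc2).
exact: (walks hb2 cc2).
Qed.

End Main.

Lemma main_iff : balanced K o i <-> balanced K1 o1 i /\ balanced K2 o2 i.
Proof.
split.
  move=> hb; split => d _ _ cd.
    have := walks hb (cycle_map_K inj_s1 S1K cd).
    by rewrite (csum_map oK oK1 inj_s1 S1K cd).
  have := walks hb (cycle_map_K inj_s2 K2K' cd).
  by rewrite (csum_map oK oK2 inj_s2 K2K' cd).
case=> hb1 hb2 c _ _ cc.
apply: (glue (adj := Badj K i) (e := Es o) _ _ hcov hsep1 hsep2 hconn (h1 hb1) (h2 hb2) cc).
- by move=> x y h; apply: Es_sym h.
- by move=> x y; apply: Badj_sym.
Qed.

End Wedge.

Theorem mainTheorem5 (V : finType) (K1 K2 : {set {set V}}) (k i : nat)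
    (F1 F2 : {set V}) (f : V -> V)
    (o o1 o2 : {set V} -> seq V) :
  is_complex K1 -> is_complex K2 ->
  [disjoint verts K1 & verts K2] ->
  F1 \in K1 -> F2 \in K2 -> #|F1| = k.+1 -> #|F2| = k.+1 ->
  f @: F1 = F2 ->
  k <= i.+1 ->
  is_orientation (wedge K1 K2 F1 f) o ->
  is_orientation K1 o1 -> is_orientation K2 o2 ->
  (balanced (wedge K1 K2 F1 f) o i <-> balanced K1 o1 i /\ balanced K2 o2 i).
Proof.
move=> cK1 cK2 dj F1K F2K cF1 cF2 fF ki oK oK1 oK2.
exact: (main_iff cK1 cK2 dj F1K F2K cF1 cF2 fF ki oK oK1 oK2).
Qed.
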